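(* Let $\tau=x+iy$ with $y>0$, and let $u,v\in\mathbb{R}$ be not both integers. For $s\in[1,2]$ and $p>w>0$ set $$h(w,s)=\sum_{\substack{(m,n)\in\mathbb{Z}^2\\ w<|m\tau+n|^2<p}}\frac{e^{2\pi i(mu+nv)}}{|m\tau+n|^{2s}}.$$ Then $h(w,s)=O(w^{1/2-s})$ uniformly for $s\in[1,2]$, with implied constant independent of $w$, $s$ and $p$. *)

(* Defs.v *)
From Stdlib Require Import Reals ZArith List.
From Coquelicot Require Import Coquelicot.
Open Scope R_scope.

Definition expi (theta : R) : C := (cos theta, sin theta).

(* |m tau + n|^2 for tau = x + i y *)
Definition lnorm2 (x y : R) (m n : Z) : R :=
  (IZR m * x + IZR n)^2 + (IZR m * y)^2.

Definition zrange (N : nat) : list Z :=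
  map (fun k => (Z.of_nat k - Z.of_nat N)%Z) (seq 0 (2 * N + 1)).

Definition hterm (x y u v w p s : R) (mn : Z * Z) : C :=
  let m := fst mn in let n := snd mn in
  let q := lnorm2 x y m n in
  if Rlt_dec w q then
    if Rlt_dec q p then
      scal (/ Rpower q s) (expi (2 * PI * (IZR m * u + IZR n * v)))
    else 0%C
  else 0%C.

(* Sum of hterm over the box [-N,N]^2. When the box contains every (m,n)
   with w < |m tau + n|^2 < p, this is exactly h(w,s). *)
Definition h_box (N : nat) (x y u v w p s : R) : C :=
  fold_right Cplus 0%C
    (map (hterm x y u v w p s) (list_prod (zrange N) (zrange N))).

(* Main.v *)
Require Import Defs.
From Stdlib Require Import Reals ZArith List Lra Lia Classical.
From Coquelicot Require Import Coquelicot.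
Open Scope R_scope.

Definition Hf (w p s q : R) : R :=
  if Rlt_dec w q then if Rlt_dec q p then / Rpower q s else 0 else 0.
Definition Ef (w s m : R) : R := / Rpower (Rmax w m) s.
Definition Phi0 (w p s q : R) : R :=
  if Rle_dec q w then 2 * / Rpower w s else if Rlt_dec q p then / Rpower q s else 0.
Definition Phif (w p s m q : R) : R :=
  if Rle_dec m q then Phi0 w p s q else 2 * Ef w s m.

Lemma ipow_anti (a b s : R) : 0 <= s -> 0 < a <= b -> / Rpower b s <= / Rpower a s.
Proof.
  intros Hs Hab. apply Rinv_le_contravar. unfold Rpower; apply exp_pos.
  apply Rle_Rpower_l; lra.
Qed.

Lemma ipow_pos (a s : R) : 0 < / Rpower a s.
Proof. apply Rinv_0_lt_compat; unfold Rpower; apply exp_pos. Qed.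

Section KL.
Variables w p s m : R.
Hypothesis hw : 0 < w. Hypothesis hs : 0 <= s. Hypothesis hm : 0 < m.
Definition allowed (q : R) := q <= w \/ m <= q.

Lemma Hf_ge0 q : 0 <= Hf w p s q.
Proof. unfold Hf. destruct Rlt_dec; [destruct Rlt_dec|]; try lra. left; apply ipow_pos. Qed.

Lemma Hf_le q : allowed q -> Hf w p s q <= Ef w s m.
Proof.
  intros Ha. pose proof (ipow_pos (Rmax w m) s).
  unfold Hf, Ef. destruct Rlt_dec; [destruct Rlt_dec|]; try lra.
  destruct Ha; [lra|]. apply ipow_anti; auto.
  split. apply Rmax_case; lra. apply Rmax_lub; lra.
Qed.

Lemma Hf_Phi0 q : m <= q -> Hf w p s q + Phi0 w p s q <= 2 * Ef w s m.
Proof.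
  intros Hq. pose proof (ipow_pos (Rmax w m) s).
  unfold Hf, Phi0, Ef.
  destruct (Rle_dec q w).
  - destruct Rlt_dec; [lra|]. rewrite Rmax_left by lra. lra.
  - destruct Rlt_dec; [|lra]. destruct Rlt_dec.
    + assert (/ Rpower q s <= / Rpower (Rmax w m) s).
      { apply ipow_anti; auto. split. apply Rmax_case; lra. apply Rmax_lub; lra. }
      lra.
    + lra.
Qed.

Lemma Phif_le q : allowed q -> Phif w p s m q <= 2 * Ef w s m.
Proof.
  intros Ha. unfold Phif. destruct Rle_dec; [|lra].
  pose proof (Hf_Phi0 q r). pose proof (Hf_ge0 q). lra.
Qed.

Lemma Phif_ge0 q : 0 <= Phif w p s m q.
Proof.
  unfold Phif, Phi0, Ef. pose proof (ipow_pos (Rmax w m) s). pose proof (ipow_pos w s).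
  pose proof (ipow_pos q s).
  destruct Rle_dec; [destruct Rle_dec; [|destruct Rlt_dec]|]; lra.
Qed.

Lemma KL x y : allowed x -> allowed y -> x <= y ->
  Rabs (Hf w p s x - Hf w p s y) <= Phif w p s m x - Phif w p s m y.
Proof.
  intros Hx Hy Hxy. unfold Phif.
  destruct (Rle_dec m x) as [Hmx|Hmx].
  - destruct (Rle_dec m y) as [Hmy|Hmy]; [|lra].
    unfold Hf, Phi0. pose proof (ipow_pos w s).
    destruct (Rle_dec x w) as [Hxw|Hxw].
    + destruct (Rlt_dec w x); [lra|].
      destruct (Rle_dec y w).
      * destruct (Rlt_dec w y); [lra|]. rewrite Rminus_diag, Rabs_R0. lra.
      * destruct (Rlt_dec w y); [|lra]. destruct (Rlt_dec y p).
        -- assert (/ Rpower y s <= / Rpower w s) by (apply ipow_anti; lra).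
           pose proof (ipow_pos y s).
           rewrite Rabs_left1 by lra. lra.
        -- rewrite Rminus_diag, Rabs_R0. lra.
    + destruct (Rlt_dec w x); [|lra]. destruct (Rle_dec y w); [lra|].
      destruct (Rlt_dec w y); [|lra].
      destruct (Rlt_dec x p); destruct (Rlt_dec y p); try lra.
      * assert (/ Rpower y s <= / Rpower x s) by (apply ipow_anti; lra).
        rewrite Rabs_right by lra. lra.
      * pose proof (ipow_pos x s). rewrite Rminus_0_r, Rabs_right by lra. lra.
      * rewrite Rminus_diag, Rabs_R0. lra.
  - assert (Hxw : x <= w) by (destruct Hx; lra).
    assert (Hx0 : Hf w p s x = 0) by (unfold Hf; destruct Rlt_dec; lra).
    rewrite Hx0.
    destruct (Rle_dec m y) as [Hmy|Hmy].
    + pose proof (Hf_Phi0 y Hmy). pose proof (Hf_ge0 y).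
      rewrite Rminus_0_l, Rabs_Ropp, Rabs_right by lra. lra.
    + assert (Hyw : y <= w) by (destruct Hy; lra).
      assert (Hy0 : Hf w p s y = 0) by (unfold Hf; destruct Rlt_dec; lra).
      rewrite Hy0, Rminus_diag, Rabs_R0. lra.
Qed.
End KL.

Fixpoint rsum (f : nat -> R) (n : nat) : R :=
  match n with O => 0 | S k => rsum f k + f k end.

Section VL.
Variables (q h phi : nat -> R) (M : R).
Hypothesis hconv : forall j, q (S (S j)) - q (S j) >= q (S j) - q j.
Hypothesis hP1 : forall i j, q i <= q j -> Rabs (h i - h j) <= phi i - phi j.
Hypothesis hM : forall j, phi j <= M.
Hypothesis h0 : forall j, 0 <= phi j.

Lemma dec_sum n : (forall j, (j < n)%nat -> q (S j) <= q j) ->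
  rsum (fun j => Rabs (h (S j) - h j)) n <= phi n - phi O.
Proof.
  induction n; intros H; simpl. lra.
  assert (IH := IHn (fun j Hj => H j ltac:(lia))).
  assert (Rabs (h (S n) - h n) <= phi (S n) - phi n) by (apply hP1, H; lia).
  lra.
Qed.

Lemma conv_mono j k : (j <= k)%nat -> q (S j) - q j <= q (S k) - q k.
Proof.
  induction 1. lra. pose proof (hconv m). lra.
Qed.

Lemma claim n : rsum (fun j => Rabs (h (S j) - h j)) n <= 2 * M - phi O - phi n.
Proof.
  induction n; simpl.
  - pose proof (hM O); lra.
  - destruct (Rle_dec (q n) (q (S n))) as [Hle|Hlt].
    + assert (Rabs (h (S n) - h n) <= phi n - phi (S n)).
      { rewrite Rabs_minus_sym. apply hP1; auto. }
      lra.
    + assert (Hd : forall j, (j < S n)%nat -> q (S j) <= q j).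
      { intros j Hj. pose proof (conv_mono j n ltac:(lia)). lra. }
      pose proof (dec_sum (S n) Hd). simpl in H. pose proof (hM (S n)). lra.
Qed.

Lemma var_bound n : rsum (fun j => Rabs (h (S j) - h j)) n <= 2 * M.
Proof. pose proof (claim n). pose proof (h0 O). pose proof (h0 n). lra. Qed.
End VL.

Fixpoint csum (f : nat -> C) (n : nat) : C :=
  match n with O => 0%C | S k => (csum f k + f k)%C end.

Lemma csum_tri f n : Cmod (csum f n) <= rsum (fun j => Cmod (f j)) n.
Proof.
  induction n; simpl. rewrite Cmod_0; lra.
  eapply Rle_trans. apply Cmod_triangle. lra.
Qed.

Lemma abel_id (c : nat -> C) (z : C) (h : nat -> R) n :
  (forall j, c (S j) = (c j * z)%C) ->
  ((z - 1) * csum (fun j => c j * RtoC (h j)) (S n)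
   = c (S n) * RtoC (h n) - c O * RtoC (h O)
     - csum (fun j => c (S j) * RtoC (h (S j) - h j)) n)%C.
Proof.
  intros Hc. induction n.
  - simpl. rewrite Hc. field.
  - cbn [csum]. cbn [csum] in IHn.
    rewrite Cmult_plus_distr_l, IHn. rewrite (Hc (S n)).
    rewrite RtoC_minus. field.
Qed.

Lemma abel_bound (c : nat -> C) (z : C) (h : nat -> R) n :
  (forall j, c (S j) = (c j * z)%C) -> (forall j, Cmod (c j) = 1) ->
  Cmod (z - 1)%C * Cmod (csum (fun j => (c j * RtoC (h j))%C) (S n))
  <= Rabs (h n) + Rabs (h O) + rsum (fun j => Rabs (h (S j) - h j)) n.
Proof.
  intros Hc Hm. rewrite <- Cmod_mult, abel_id by auto.
  eapply Rle_trans. apply Cmod_triangle. rewrite Cmod_opp.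
  eapply Rle_trans. apply Rplus_le_compat_r. apply Cmod_triangle.
  rewrite Cmod_opp, !Cmod_mult, !Hm, !Cmod_R.
  assert (E : forall k, rsum (fun j => Cmod ((c (S j) * RtoC (h (S j) - h j))%C)) k
    = rsum (fun j => Rabs (h (S j) - h j)) k).
  { induction k; simpl; auto. rewrite IHk, Cmod_mult, Hm, Cmod_R. ring. }
  pose proof (csum_tri (fun j => c (S j) * RtoC (h (S j) - h j))%C n).
  cbv beta in H. rewrite E in H. lra.
Qed.


Lemma expi_add a b : expi (a + b) = (expi a * expi b)%C.
Proof.
  unfold expi. rewrite cos_plus, sin_plus. apply injective_projections; simpl; ring.
Qed.

Lemma Cmod_expi t : Cmod (expi t) = 1.
Proof.
  unfold Cmod, expi; simpl. rewrite <- sqrt_1 at 3. f_equal.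
  pose proof (sin2_cos2 t). unfold Rsqr in H. nra.
Qed.

Lemma csum_peel f n : csum f (S n) = (f O + csum (fun j => f (S j)) n)%C.
Proof.
  induction n. simpl. ring.
  change (csum f (S (S n))) with (csum f (S n) + f (S n))%C. rewrite IHn. simpl. ring.
Qed.

Lemma fold_seq (F : nat -> C) k n :
  fold_right Cplus 0%C (map F (seq k n)) = csum (fun j => F (k + j)%nat) n.
Proof.
  revert k; induction n; intros k. reflexivity.
  rewrite csum_peel. simpl. rewrite IHn. rewrite Nat.add_0_r.
  assert (Hx : forall m, csum (fun j => F (S k + j)%nat) m = csum (fun j => F (k + S j)%nat) m).
  { induction m; cbn [csum]; auto. rewrite IHm. do 2 f_equal. lia. }
  rewrite Hx. reflexivity.
Qed.

Lemma fold_zrange (g : Z -> C) N :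
  fold_right Cplus 0%C (map g (zrange N)) =
  csum (fun j => g (Z.of_nat j - Z.of_nat N)%Z) (S (2 * N)).
Proof.
  unfold zrange. rewrite map_map, fold_seq. replace (2 * N + 1)%nat with (S (2 * N)) by lia.
  reflexivity.
Qed.

Lemma row_bound N (Q th : Z -> R) al w p s m :
  0 < w -> 0 <= s -> 0 < m -> expi (2 * PI * al) <> 1%C ->
  (forall a, th (a + 1)%Z = th a + al) ->
  (forall a, Q (a + 2)%Z - Q (a + 1)%Z >= Q (a + 1)%Z - Q a) ->
  (forall a, allowed w m (Q a)) ->
  Cmod (fold_right Cplus 0%C
     (map (fun a => (expi (2 * PI * th a) * RtoC (Hf w p s (Q a)))%C) (zrange N)))
  <= 6 * Ef w s m / Cmod (expi (2 * PI * al) - 1)%C.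
Proof.
  intros hw hs hm hz hth hQ hal.
  rewrite fold_zrange.
  set (q := fun j : nat => Q (Z.of_nat j - Z.of_nat N)%Z).
  set (c := fun j : nat => expi (2 * PI * th (Z.of_nat j - Z.of_nat N)%Z)).
  set (h := fun j : nat => Hf w p s (q j)).
  change (fun j : nat => (expi (2 * PI * th (Z.of_nat j - Z.of_nat N)%Z)
           * RtoC (Hf w p s (Q (Z.of_nat j - Z.of_nat N)%Z)))%C)
    with (fun j => (c j * RtoC (h j))%C).
  assert (hd : 0 < Cmod (expi (2 * PI * al) - 1)%C).
  { apply Cmod_gt_0. intro E. apply hz. 
    replace (expi (2 * PI * al)) with ((expi (2 * PI * al) - 1) + 1)%C by ring.
    rewrite E. ring. }
  assert (Hc : forall j, c (S j) = (c j * expi (2 * PI * al))%C).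
  { intro j. unfold c. rewrite <- expi_add. f_equal.
    replace (Z.of_nat (S j) - Z.of_nat N)%Z with ((Z.of_nat j - Z.of_nat N) + 1)%Z by lia.
    rewrite hth. ring. }
  assert (Hm : forall j, Cmod (c j) = 1) by (intro; apply Cmod_expi).
  pose proof (abel_bound c _ h (2 * N) Hc Hm) as HA.
  assert (Hal : forall j, allowed w m (q j)) by (intro; apply hal).
  assert (HV : rsum (fun j => Rabs (h (S j) - h j)) (2 * N) <= 2 * (2 * Ef w s m)).
  { apply (var_bound q h (fun j => Phif w p s m (q j))).
    - intro j. unfold q.
      replace (Z.of_nat (S (S j)) - Z.of_nat N)%Z with ((Z.of_nat j - Z.of_nat N) + 2)%Z by lia.
      replace (Z.of_nat (S j) - Z.of_nat N)%Z with ((Z.of_nat j - Z.of_nat N) + 1)%Z by lia.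
      apply hQ.
    - intros i j Hij. apply KL; auto.
    - intro j. apply Phif_le; auto.
    - intro j. apply Phif_ge0; auto. }
  assert (H1 : Rabs (h (2 * N)%nat) <= Ef w s m).
  { unfold h. rewrite Rabs_right by (apply Rle_ge, Hf_ge0; auto). apply Hf_le; auto. }
  assert (H2 : Rabs (h O) <= Ef w s m).
  { unfold h. rewrite Rabs_right by (apply Rle_ge, Hf_ge0; auto). apply Hf_le; auto. }
  apply Rmult_le_reg_l with (Cmod (expi (2 * PI * al) - 1)%C); auto.
  unfold Rdiv. rewrite (Rmult_comm (6 * _)), <- Rmult_assoc, Rinv_r, Rmult_1_l by lra.
  lra.
Qed.

Definition lsC {A} (l : list A) (f : A -> C) : C := fold_right Cplus 0%C (map f l).
Definition lsR {A} (l : list A) (f : A -> R) : R := fold_right Rplus 0 (map f l).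

Lemma lsC_app {A} (l1 l2 : list A) f : lsC (l1 ++ l2) f = (lsC l1 f + lsC l2 f)%C.
Proof. induction l1; unfold lsC in *; simpl. ring. rewrite IHl1. ring. Qed.

Lemma lsC_plus {A} (l : list A) f g : lsC l (fun a => f a + g a)%C = (lsC l f + lsC l g)%C.
Proof. induction l; unfold lsC in *; simpl. ring. rewrite IHl. ring. Qed.

Lemma lsC_prod {A B} (l1 : list A) (l2 : list B) (f : A * B -> C) :
  fold_right Cplus 0%C (map f (list_prod l1 l2)) =
  lsC l1 (fun a => lsC l2 (fun b => f (a, b))).
Proof.
  induction l1; simpl. reflexivity.
  change (fold_right Cplus 0%C (map f (map (fun y => (a, y)) l2 ++ list_prod l1 l2)))
    with (lsC (map (fun y => (a, y)) l2 ++ list_prod l1 l2) f).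
  rewrite lsC_app. unfold lsC at 2. rewrite IHl1. unfold lsC at 1. rewrite map_map.
  reflexivity.
Qed.

Lemma lsC_swap {A B} (l1 : list A) (l2 : list B) (F : A -> B -> C) :
  lsC l1 (fun a => lsC l2 (fun b => F a b)) = lsC l2 (fun b => lsC l1 (fun a => F a b)).
Proof.
  induction l1; simpl.
  - unfold lsC; simpl. induction l2; simpl; auto. rewrite <- IHl2. ring.
  - unfold lsC at 1. simpl. fold (lsC l1 (fun a => lsC l2 (fun b => F a b))).
    rewrite IHl1. unfold lsC at 4. simpl.
    rewrite <- lsC_plus. reflexivity.
Qed.

Lemma lsC_tri {A} (l : list A) f : Cmod (lsC l f) <= lsR l (fun a => Cmod (f a)).
Proof.
  induction l; unfold lsC, lsR in *; simpl. rewrite Cmod_0; lra.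
  eapply Rle_trans. apply Cmod_triangle. lra.
Qed.

Lemma lsR_le {A} (l : list A) f g : (forall a, f a <= g a) -> lsR l f <= lsR l g.
Proof. intros H; induction l; unfold lsR in *; simpl. lra. pose proof (H a); lra. Qed.

Lemma lsR_scal {A} (l : list A) f c : lsR l (fun a => c * f a) = c * lsR l f.
Proof. induction l; unfold lsR in *; simpl. ring. rewrite IHl. ring. Qed.

Lemma lsR_app {A} (l1 l2 : list A) f : lsR (l1 ++ l2) f = lsR l1 f + lsR l2 f.
Proof. induction l1; unfold lsR in *; simpl. ring. rewrite IHl1. ring. Qed.

Lemma zrange_S N : zrange (S N) = ((- Z.of_nat (S N))%Z :: zrange N ++ (Z.of_nat (S N) :: nil)).
Proof.
  unfold zrange.
  replace (2 * S N + 1)%nat with (S (S (2 * N + 1))) by lia.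
  rewrite seq_S. change (seq 0 (S (2 * N + 1))) with (0%nat :: seq 1 (2 * N + 1)).
  rewrite <- seq_shift. rewrite map_app. cbn [map app]. rewrite map_map.
  apply f_equal2. lia. apply f_equal2.
  - apply map_ext. intro k. lia.
  - apply f_equal2. lia. reflexivity.
Qed.

Section Outer.
Variables w mu : R.
Hypothesis hw : 0 < w. Hypothesis hmu : 0 < mu.
Definition kk := sqrt w / sqrt mu.
Definition Fo (b : Z) : R := / Rmax w (mu * (1 + IZR b ^ 2)).
Definition Psi (n : nat) : R :=
  if Rle_dec (INR n) kk then (kk - INR n) / w + 2 / (mu * kk) else 2 / (mu * (INR n + 1)).

Lemma kk_pos : 0 < kk.
Proof. unfold kk. apply Rdiv_lt_0_compat; apply sqrt_lt_R0; auto. Qed.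

Lemma mu_kk2 : mu * (kk * kk) = w.
Proof.
  unfold kk. pose proof (sqrt_lt_R0 mu hmu).
  field_simplify; [|lra]. rewrite !pow2_sqrt by lra. field. lra.
Qed.

Lemma Psi_ge0 n : 0 <= Psi n.
Proof.
  pose proof kk_pos. pose proof (pos_INR n). unfold Psi. destruct Rle_dec.
  - assert (0 <= (kk - INR n) / w) by (apply Rdiv_le_0_compat; lra).
    assert (0 < 2 / (mu * kk)) by (apply Rdiv_lt_0_compat; nra). lra.
  - left. apply Rdiv_lt_0_compat; nra.
Qed.

Lemma key_ineq t : 1 <= t -> / (mu * (t * t)) + 2 / (mu * (t + 1)) <= 2 / (mu * t).
Proof.
  intros Ht.
  assert (E : 2 / (mu * t) - (/ (mu * (t * t)) + 2 / (mu * (t + 1)))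
              = (t - 1) / (mu * (t * t) * (t + 1))) by (field; lra).
  assert (0 <= (t - 1) / (mu * (t * t) * (t + 1))).
  { apply Rdiv_le_0_compat. lra. apply Rmult_lt_0_compat. apply Rmult_lt_0_compat. lra.
    apply Rmult_lt_0_compat; lra. lra. }
  lra.
Qed.

Lemma Fo_step n : Fo (Z.of_nat (S n)) <= Psi n - Psi (S n).
Proof.
  pose proof kk_pos as Hk. pose proof mu_kk2 as Hmk. pose proof (pos_INR n) as Hn.
  unfold Fo. rewrite <- INR_IZR_INZ, S_INR.
  set (t := INR n + 1).
  assert (F1 : / Rmax w (mu * (1 + t ^ 2)) <= / w).
  { apply Rinv_le_contravar; auto. apply Rmax_l. }
  assert (F2 : / Rmax w (mu * (1 + t ^ 2)) <= / (mu * (t * t))).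
  { apply Rinv_le_contravar. unfold t; nra. eapply Rle_trans; [|apply Rmax_r]. nra. }
  pose proof (key_ineq t ltac:(unfold t; lra)) as K.
  unfold Psi. rewrite S_INR. fold t.
  destruct (Rle_dec (INR n) kk); destruct (Rle_dec t kk).
  - replace ((kk - INR n) / w + 2 / (mu * kk) - ((kk - t) / w + 2 / (mu * kk))) with (/ w)
      by (unfold t; field; lra). auto.
  - assert (2 / (mu * t) <= 2 / (mu * kk)).
    { unfold Rdiv. apply Rmult_le_compat_l. lra. apply Rinv_le_contravar; nra. }
    assert (0 <= (kk - INR n) / w) by (apply Rdiv_le_0_compat; lra).
    lra.
  - unfold t in r. lra.
  - replace (INR n + 1) with t by reflexivity. 
    assert (Ht : t = INR n + 1) by reflexivity.
    assert (2 / (mu * INR n + mu) = 2 / (mu * t)) by (rewrite Ht; f_equal; ring).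
    lra.
Qed.

Lemma Fo_sym b : Fo (- b) = Fo b.
Proof. unfold Fo. rewrite opp_IZR. f_equal. f_equal. ring. Qed.

Lemma outer_sum N : lsR (zrange N) Fo <= 7 / (sqrt w * sqrt mu).
Proof.
  assert (HP : forall N, lsR (zrange N) Fo + 2 * Psi N <= Fo 0 + 2 * Psi O).
  { induction N0.
    - unfold zrange, lsR; simpl. lra.
    - rewrite zrange_S.
      change (lsR (- Z.of_nat (S N0) :: zrange N0 ++ Z.of_nat (S N0) :: nil)%Z Fo)
        with (Fo (- Z.of_nat (S N0))%Z + lsR (zrange N0 ++ Z.of_nat (S N0) :: nil) Fo).
      rewrite lsR_app. unfold lsR at 2. cbn [map fold_right]. rewrite Fo_sym.
      pose proof (Fo_step N0). lra. }
  pose proof (HP N). pose proof (Psi_ge0 N).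
  pose proof (sqrt_lt_R0 w hw). pose proof (sqrt_lt_R0 mu hmu).
  assert (E0 : Psi O = 3 / (sqrt w * sqrt mu)).
  { unfold Psi. simpl. destruct Rle_dec. 2:{ pose proof kk_pos. lra. }
    unfold kk. assert (Hm : mu = sqrt mu * sqrt mu) by (rewrite sqrt_sqrt; lra).
    assert (Hw : w = sqrt w * sqrt w) by (rewrite sqrt_sqrt; lra).
    set (sm := sqrt mu) in *. set (sw := sqrt w) in *. rewrite Hm, Hw. field. lra. }
  assert (F0 : Fo 0 <= 1 / (sqrt w * sqrt mu)).
  { unfold Fo. simpl. replace (mu * (1 + 0 * (0 * 1))) with mu by ring.
    unfold Rdiv. rewrite Rmult_1_l. apply Rinv_le_contravar. nra.
    rewrite <- sqrt_mult by lra. 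
    apply Rmax_case_strong; intro Hm.
    - rewrite <- (sqrt_sqrt w) at 2 by lra. rewrite sqrt_mult by lra.
      apply Rmult_le_compat_l. lra. apply sqrt_le_1; lra.
    - rewrite <- (sqrt_sqrt mu) at 2 by lra. rewrite sqrt_mult by lra.
      rewrite Rmult_comm. apply Rmult_le_compat_l. lra. apply sqrt_le_1; lra. }
  lra.
Qed.
End Outer.

Lemma hterm_eq x y u v w p s m n :
  hterm x y u v w p s (m, n) =
  (expi (2 * PI * (IZR m * u + IZR n * v)) * RtoC (Hf w p s (lnorm2 x y m n)))%C.
Proof.
  unfold hterm, Hf. simpl.
  destruct Rlt_dec; [destruct Rlt_dec|].
  - destruct (expi _) as [c1 c2]. unfold scal; simpl. unfold ModuleSpace.scal; simpl.
    unfold prod_scal; simpl. unfold scal; simpl. unfold mult; simpl.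
    apply injective_projections; simpl; ring.
  - apply injective_projections; simpl; ring.
  - apply injective_projections; simpl; ring.
Qed.

Lemma not_int_ne1 al : ~ (exists a, al = IZR a) -> expi (2 * PI * al) <> 1%C.
Proof.
  intros Hn E. apply Hn. unfold expi in E. injection E as E1 E2.
  replace (2 * PI * al) with (2 * (PI * al)) in E1 by ring.
  rewrite cos_2a_sin in E1.
  assert (Hs : sin (PI * al) = 0) by nra.
  destruct (sin_eq_0_0 _ Hs) as [k Hk]. exists k.
  pose proof PI_RGT_0. apply Rmult_eq_reg_l with PI; lra.
Qed.

Definition lam (x y : R) := y ^ 2 / (2 * y ^ 2 + 1 + 2 * x ^ 2).

Lemma lam_pos x y : 0 < y -> 0 < lam x y.
Proof. intros. unfold lam. apply Rdiv_lt_0_compat; nra. Qed.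

Lemma latt_lb x y m n : 0 < y -> lam x y * (IZR m ^ 2 + IZR n ^ 2) <= lnorm2 x y m n.
Proof.
  intros hy. unfold lam, lnorm2. set (a := IZR m). set (b := IZR n).
  assert (D : 0 < 2 * y ^ 2 + 1 + 2 * x ^ 2) by nra.
  unfold Rdiv. rewrite Rmult_assoc, (Rmult_comm (/ _)), <- Rmult_assoc.
  apply Rle_trans with (((a * x + b) ^ 2 + (a * y) ^ 2) * (2 * y ^ 2 + 1 + 2 * x ^ 2) * / (2 * y ^ 2 + 1 + 2 * x ^ 2)).
  - apply Rmult_le_compat_r. left; apply Rinv_0_lt_compat; auto.
    pose proof (pow2_ge_0 (y * (a*x + (a*x+b)))).
    pose proof (pow2_ge_0 (a * y * y)).
    pose proof (pow2_ge_0 (x * (a * x + b))).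
    pose proof (pow2_ge_0 (a * x + b)).
    assert (E : ((a * x + b) ^ 2 + (a * y) ^ 2) * (2 * y ^ 2 + 1 + 2 * x ^ 2) - y ^ 2 * (a ^ 2 + b ^ 2)
      = (y * (a*x + (a*x+b)))^2 + 2 * (a * y * y)^2 + (a * x + b) ^ 2 + 2 * (x * (a * x + b))^2) by ring.
    lra.
  - rewrite Rmult_assoc, Rinv_r, Rmult_1_r by lra. lra.
Qed.

Lemma IZR_sq_ge1 k : k <> 0%Z -> 1 <= IZR k ^ 2.
Proof.
  intros Hk. replace (IZR k ^ 2) with (IZR (k * k)) by (rewrite mult_IZR; ring).
  apply IZR_le. nia.
Qed.

Lemma latt_allowed x y w m n : 0 < y -> 0 < w ->
  allowed w (lam x y / 2 * (1 + IZR m ^ 2)) (lnorm2 x y m n) /\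
  allowed w (lam x y / 2 * (1 + IZR n ^ 2)) (lnorm2 x y m n).
Proof.
  intros hy hw. pose proof (latt_lb x y m n hy). pose proof (lam_pos x y hy).
  unfold allowed.
  destruct (Z.eq_dec m 0) as [Hm|Hm]; destruct (Z.eq_dec n 0) as [Hn|Hn].
  - subst. unfold lnorm2. simpl. split; left; nra.
  - subst. pose proof (IZR_sq_ge1 n Hn). simpl in *. split; right; nra.
  - subst. pose proof (IZR_sq_ge1 m Hm). simpl in *. split; right; nra.
  - pose proof (IZR_sq_ge1 n Hn). pose proof (IZR_sq_ge1 m Hm). split; right; nra.
Qed.

Lemma Ef_bound w s M : 1 <= s -> 0 < w -> 0 < M ->
  Ef w s M <= Rpower w (1 - s) * / Rmax w M.
Proof.
  intros hs hw hM. unfold Ef.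
  set (X := Rmax w M).
  assert (hX : w <= X) by apply Rmax_l.
  replace s with (1 + (s - 1)) at 1 by ring.
  rewrite Rpower_plus, Rpower_1 by lra.
  replace (1 - s) with (- (s - 1)) by ring. rewrite Rpower_Ropp.
  rewrite <- Rinv_mult. apply Rinv_le_contravar.
  - apply Rmult_lt_0_compat; [unfold Rpower; apply exp_pos | lra].
  - rewrite Rmult_comm. apply Rmult_le_compat_l. lra. apply Rle_Rpower_l; lra.
Qed.

Lemma final_bound (d w s mu : R) N (G : Z -> C) : 0 < d -> 0 < w -> 1 <= s -> 0 < mu ->
  (forall b, Cmod (G b) <= 6 * Ef w s (mu * (1 + IZR b ^ 2)) / d) ->
  Cmod (lsC (zrange N) G) <= 42 / (d * sqrt mu) * Rpower w (1 / 2 - s).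
Proof.
  intros hd hw hs hmu HG.
  eapply Rle_trans. apply lsC_tri.
  eapply Rle_trans. apply lsR_le with (g := fun b => (6 / d * Rpower w (1 - s)) * Fo w mu b).
  { intro b. eapply Rle_trans. apply HG. unfold Fo.
    assert (0 < mu * (1 + IZR b ^ 2)) by (apply Rmult_lt_0_compat; [lra| nra]).
    pose proof (Ef_bound w s _ hs hw H).
    unfold Rdiv. assert (0 < / d) by (apply Rinv_0_lt_compat; lra).
    replace (6 * Ef w s (mu * (1 + IZR b ^ 2)) * / d) with ((6 * / d) * Ef w s (mu * (1 + IZR b ^ 2))) by ring.
    apply Rle_trans with (6 * / d * (Rpower w (1 - s) * / Rmax w (mu * (1 + IZR b ^ 2)))).
    apply Rmult_le_compat_l. lra. exact H0. right; ring. }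
  rewrite lsR_scal.
  pose proof (outer_sum w mu hw hmu N).
  assert (0 < Rpower w (1 - s)) by (unfold Rpower; apply exp_pos).
  eapply Rle_trans. apply Rmult_le_compat_l; [|exact H].
  { apply Rmult_le_pos; [|lra]. apply Rdiv_le_0_compat; lra. }
  pose proof (sqrt_lt_R0 w hw). pose proof (sqrt_lt_R0 mu hmu).
  assert (E : Rpower w (1 - s) = Rpower w (1/2 - s) * sqrt w).
  { rewrite <- Rpower_sqrt, <- Rpower_plus by lra. f_equal. field. }
  rewrite E. right. field. lra.
Qed.

Theorem mainTheorem9 (x y u v : R) (hy : 0 < y)
  (huv : ~ ((exists a : Z, u = IZR a) /\ (exists b : Z, v = IZR b))) :
  exists C0 : R, forall (w p s : R) (N : nat),
    0 < w -> w < p -> 1 <= s <= 2 ->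
    (forall m n : Z, w < lnorm2 x y m n < p ->
       (Z.abs m <= Z.of_nat N)%Z /\ (Z.abs n <= Z.of_nat N)%Z) ->
    Cmod (h_box N x y u v w p s) <= C0 * Rpower w (1/2 - s).
Proof.
  set (mu := lam x y / 2).
  assert (hmu : 0 < mu) by (unfold mu; pose proof (lam_pos x y hy); lra).
  destruct (classic (exists b : Z, v = IZR b)) as [Hv|Hv].
  - (* u not an integer: inner variable m *)
    assert (Hu : ~ (exists a : Z, u = IZR a)) by tauto.
    pose proof (not_int_ne1 u Hu) as hz.
    set (d := Cmod (expi (2 * PI * u) - 1)%C).
    assert (hd : 0 < d).
    { apply Cmod_gt_0. intro E. apply hz.
      replace (expi (2 * PI * u)) with ((expi (2 * PI * u) - 1) + 1)%C by ring.
      rewrite E. ring. }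
    exists (42 / (d * sqrt mu)). intros w p s N hw hwp hs _.
    unfold h_box. rewrite lsC_prod, lsC_swap.
    apply final_bound; auto. lra.
    intro b.
    replace (lsC (zrange N) (fun a => hterm x y u v w p s (a, b))) with
      (fold_right Cplus 0%C (map (fun a => (expi ((2 * PI * (IZR a * u + IZR b * v))%R)
          * RtoC (Hf w p s (lnorm2 x y a b)))%C) (zrange N))).
    2:{ unfold lsC. f_equal. apply map_ext. intro a. rewrite hterm_eq. reflexivity. }
    apply (row_bound N (fun a => lnorm2 x y a b) (fun a => IZR a * u + IZR b * v)); auto; try lra.
    + apply Rmult_lt_0_compat; [lra|nra].
    + intro a. rewrite plus_IZR. simpl. ring.
    + intro a. unfold lnorm2. rewrite !plus_IZR. simpl. nra.
    + intro a. apply (latt_allowed x y w a b hy hw).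
  - (* v not an integer: inner variable n *)
    pose proof (not_int_ne1 v Hv) as hz.
    set (d := Cmod (expi (2 * PI * v) - 1)%C).
    assert (hd : 0 < d).
    { apply Cmod_gt_0. intro E. apply hz.
      replace (expi (2 * PI * v)) with ((expi (2 * PI * v) - 1) + 1)%C by ring.
      rewrite E. ring. }
    exists (42 / (d * sqrt mu)). intros w p s N hw hwp hs _.
    unfold h_box. rewrite lsC_prod.
    apply final_bound; auto. lra.
    intro b.
    replace (lsC (zrange N) (fun a => hterm x y u v w p s (b, a))) with
      (fold_right Cplus 0%C (map (fun a => (expi ((2 * PI * (IZR b * u + IZR a * v))%R)
          * RtoC (Hf w p s (lnorm2 x y b a)))%C) (zrange N))).
    2:{ unfold lsC. f_equal. apply map_ext. intro a. rewrite hterm_eq. reflexivity. }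
    apply (row_bound N (fun a => lnorm2 x y b a) (fun a => IZR b * u + IZR a * v)); auto; try lra.
    + apply Rmult_lt_0_compat; [lra|nra].
    + intro a. rewrite plus_IZR. simpl. ring.
    + intro a. unfold lnorm2. rewrite !plus_IZR. simpl. nra.
    + intro a. apply (latt_allowed x y w b a hy hw).
Qed.
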